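(* Consider the one-dimensional Euler equations with ratio of specific heats $\gamma>1$, conserved variables $u=(\rho,\rho u,\rho e^t)^T$ with $\rho>0$, $p>0$, $\rho e^t = \frac{p}{\gamma-1}+\frac12\rho u^2$, and entropy variables $$v=\Big[\frac{\gamma-S}{\gamma-1}-\frac12\frac{\rho u^2}{p},\ \frac{\rho u}{p},\ -\frac{\rho}{p}\Big]^T,\qquad S=\ln p-\gamma\ln\rho .$$ Given two states (labelled $n$ and $n+1$), set $z_1=\sqrt{\rho/p}$, $z_2=\sqrt{\rho/p}\,u$, $z_3=\sqrt{\rho p}$ for each state, and for a quantity $z$ let $[z]=z^{n+1}-z^{n}$, $\bar z=\frac12(z^n+z^{n+1})$, and $z^{\ln}=[z]/[\ln z]$ (logarithmic mean, with $z^{\ln}=z^n$ when $z^n=z^{n+1}$). Define $u^*=(u_1,u_2,u_3)^T$ by $$u_1=\bar z_1\, z_3^{\ln},\qquad u_2=u_1\frac{\bar z_2}{\bar z_1},\qquad u_3=\frac{1}{2\bar z_1}\Big(-u_1\frac{1+\gamma}{1-\gamma}\frac{1}{z_1^{\ln}}+u_2\bar z_2-\bar z_3\Big).$$ Then $u^*$ satisfies the entropy-conservation condition in time $$[v]\cdot u^* = [\rho],$$ i.e. $(v^{n+1}-v^n)\cdot u^*=\rho^{n+1}-\rho^n$, where $\rho=v\cdot u-U$ is the temporal flux potential for the entropy $U=-\rho S/(\gamma-1)$. Moreover $u^*$ is consistent: if the two states coincide, $u^*$ equals the common conserved state $u$.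
   Context: Here $\rho$ is density, $u$ velocity, $p$ pressure, $e^t$ total energy per unit mass. The entropy function is $U(u)=-\frac{\rho S}{\gamma-1}$, and $v=(\partial U/\partial u)^T$ are the entropy variables given in the claim. A temporal interface flux $u^*$ between time levels $n$ and $n+1$ is called entropy conservative if $[v]\cdot u^*=[\phi]$ with $\phi=v\cdot u-U$; for this entropy $\phi=\rho$. *)

(* Defs.v *)
From Stdlib Require Import Reals.
Open Scope R_scope.

Record state := mkState { rho : R; vel : R; pres : R }.

Definition cons1 (s : state) : R := rho s.
Definition cons2 (s : state) : R := rho s * vel s.
Definition cons3 (g : R) (s : state) : R :=
  pres s / (g - 1) + / 2 * rho s * vel s ^ 2.

Definition entS (g : R) (s : state) : R := ln (pres s) - g * ln (rho s).

Definition ev1 (g : R) (s : state) : R :=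
  (g - entS g s) / (g - 1) - / 2 * (rho s * vel s ^ 2) / pres s.
Definition ev2 (s : state) : R := rho s * vel s / pres s.
Definition ev3 (s : state) : R := - (rho s / pres s).

Definition z1 (s : state) : R := sqrt (rho s / pres s).
Definition z2 (s : state) : R := sqrt (rho s / pres s) * vel s.
Definition z3 (s : state) : R := sqrt (rho s * pres s).

Definition amean (a b : R) : R := / 2 * (a + b).
Definition logmean (a b : R) : R :=
  if Req_EM_T a b then a else (b - a) / (ln b - ln a).

Definition ustar1 (sn sn1 : state) : R :=
  amean (z1 sn) (z1 sn1) * logmean (z3 sn) (z3 sn1).
Definition ustar2 (sn sn1 : state) : R :=
  ustar1 sn sn1 * (amean (z2 sn) (z2 sn1) / amean (z1 sn) (z1 sn1)).
Definition ustar3 (g : R) (sn sn1 : state) : R :=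
  / (2 * amean (z1 sn) (z1 sn1)) *
  ( - ustar1 sn sn1 * ((1 + g) / (1 - g)) * / logmean (z1 sn) (z1 sn1)
    + ustar2 sn sn1 * amean (z2 sn) (z2 sn1)
    - amean (z3 sn) (z3 sn1) ).

(* Main.v *)
Require Import Defs.
From Stdlib Require Import Reals Lra Field.
Open Scope R_scope.

Lemma z1_mk a c u : 0 < a -> 0 < c -> z1 (mkState (a*c) u (c/a)) = a.
Proof. intros; unfold z1; simpl.
  replace (a*c/(c/a)) with (a*a) by (field; lra). apply sqrt_square; lra. Qed.
Lemma z3_mk a c u : 0 < a -> 0 < c -> z3 (mkState (a*c) u (c/a)) = c.
Proof. intros; unfold z3; simpl.
  replace (a*c*(c/a)) with (c*c) by (field; lra). apply sqrt_square; lra. Qed.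
Lemma z2_mk a c u : 0 < a -> 0 < c -> z2 (mkState (a*c) u (c/a)) = a*u.
Proof. intros; unfold z2. pose proof (z1_mk a c u H H0) as E. unfold z1 in E. rewrite E. reflexivity. Qed.

Lemma rep s : 0 < rho s -> 0 < pres s ->
  s = mkState (z1 s * z3 s) (vel s) (z3 s / z1 s).
Proof.
  destruct s as [r u p]; simpl; intros Hr Hp. unfold z1, z3; simpl.
  assert (H1: 0 < sqrt (r/p)) by (apply sqrt_lt_R0; apply Rdiv_lt_0_compat; lra).
  assert (E1: sqrt (r/p) * sqrt (r*p) = r).
  { rewrite <- (sqrt_mult_alt (r/p) (r*p)) by (apply Rlt_le, Rdiv_lt_0_compat; lra).
    replace (r/p*(r*p)) with (r*r) by (field; lra). apply sqrt_square; lra. }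
  assert (E2: sqrt (r*p) = p * sqrt (r/p)).
  { transitivity (sqrt (p*p) * sqrt (r/p)).
    - rewrite <- (sqrt_mult_alt (p*p) (r/p)) by nra. f_equal. field; lra.
    - rewrite sqrt_square by lra. reflexivity. }
  f_equal; [lra|]. rewrite E2. field. lra.
Qed.

Lemma lnd c a : 0 < c -> 0 < a -> ln (c/a) = ln c - ln a.
Proof. intros. unfold Rdiv. rewrite ln_mult, ln_Rinv; try apply Rinv_0_lt_compat; lra. Qed.

Lemma core g a0 c0 v0 a1 c1 v1 : 1 < g -> 0 < a0 -> 0 < c0 -> 0 < a1 -> 0 < c1 ->
  let sn := mkState (a0*c0) v0 (c0/a0) in let sn1 := mkState (a1*c1) v1 (c1/a1) in
  (ev1 g sn1 - ev1 g sn) * ustar1 sn sn1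
  + (ev2 sn1 - ev2 sn) * ustar2 sn sn1
  + (ev3 sn1 - ev3 sn) * ustar3 g sn sn1
  = rho sn1 - rho sn.
Proof.
  intros Hg H0 H1 H2 H3 sn sn1. unfold sn, sn1.
  unfold ustar3, ustar2, ustar1, amean.
  rewrite !z1_mk, !z2_mk, !z3_mk by lra.
  unfold ev1, ev2, ev3, entS; simpl.
  rewrite !ln_mult, !lnd by lra.
  unfold logmean.
  destruct (Req_EM_T c0 c1) as [e|n1]; destruct (Req_EM_T a0 a1) as [e'|n2].
  - subst. field. lra.
  - subst. assert (ln a1 - ln a0 <> 0).
    { intro h. apply n2. apply ln_inv; lra. }
    field. repeat split; try lra.
  - subst. assert (ln c1 - ln c0 <> 0).
    { intro h. apply n1. apply ln_inv; lra. }
    field. repeat split; try lra.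
  - assert (ln a1 - ln a0 <> 0).
    { intro h. apply n2. apply ln_inv; lra. }
    assert (ln c1 - ln c0 <> 0).
    { intro h. apply n1. apply ln_inv; lra. }
    field. repeat split; try lra.
Qed.

Theorem mainTheorem1 (g : R) (sn sn1 : state) :
  1 < g ->
  0 < rho sn -> 0 < pres sn -> 0 < rho sn1 -> 0 < pres sn1 ->
  (* entropy conservation in time: [v] . u* = [rho] *)
  (ev1 g sn1 - ev1 g sn) * ustar1 sn sn1
  + (ev2 sn1 - ev2 sn) * ustar2 sn sn1
  + (ev3 sn1 - ev3 sn) * ustar3 g sn sn1
  = rho sn1 - rho sn
  /\
  (* consistency: if the two states coincide, u* is the conserved state *)
  (sn = sn1 ->
     ustar1 sn sn1 = cons1 sn /\ ustar2 sn sn1 = cons2 sn /\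
     ustar3 g sn sn1 = cons3 g sn).
Proof.
  intros Hg Hr0 Hp0 Hr1 Hp1.
  assert (Ha0 : 0 < z1 sn) by (apply sqrt_lt_R0, Rdiv_lt_0_compat; lra).
  assert (Hc0 : 0 < z3 sn) by (apply sqrt_lt_R0, Rmult_lt_0_compat; lra).
  assert (Ha1 : 0 < z1 sn1) by (apply sqrt_lt_R0, Rdiv_lt_0_compat; lra).
  assert (Hc1 : 0 < z3 sn1) by (apply sqrt_lt_R0, Rmult_lt_0_compat; lra).
  rewrite (rep sn Hr0 Hp0), (rep sn1 Hr1 Hp1).
  generalize (z1 sn) (z3 sn) (vel sn) (z1 sn1) (z3 sn1) (vel sn1) Ha0 Hc0 Ha1 Hc1.
  clear - Hg. intros a0 c0 v0 a1 c1 v1 H0 H1 H2 H3. split.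
  - apply (core g a0 c0 v0 a1 c1 v1); assumption.
  - intro E. rewrite <- E. clear E.
    unfold ustar3, ustar2, ustar1, amean, cons1, cons2, cons3, logmean.
    rewrite !z1_mk, !z2_mk, !z3_mk by lra. simpl.
    destruct (Req_EM_T c0 c0) as [_|n]; [|now elim n].
    destruct (Req_EM_T a0 a0) as [_|n]; [|now elim n].
    repeat split; field; lra.
Qed.
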